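(* Let $\mathcal P^*$ be any partition of $\mathcal M$ minimizing $\Delta$, and let $\lambda^*=\lambda^{(\mathcal P^* )}$. Then for any CR $\mathbf J$ obtained from an interactive communication $\mathbf F$, $$\lim_{n\to\infty}\frac1n\sum_{B\in\mathcal B}\lambda^*_B\,H(\mathbf J|X^n_{B^c},\mathbf F)=0.$$
   Context: Let $\mathcal M=\{1,\dots,m\}$, $m\ge2$, and let $X_{\mathcal M}=(X_1,\dots,X_m)$ be jointly distributed random variables on finite alphabets. $X^n_{\mathcal M}$ consists of $n$ i.i.d. copies of $X_{\mathcal M}$, and $X^n_A=(X^n_i:i\in A)$. An interactive communication $\mathbf F$ (depending on $n$) is a finite sequence of transmissions; each is sent by some terminal $i$ and is a deterministic function of $X^n_i$ and the previous transmissions. A common randomness (CR) obtained from $\mathbf F$ is a sequence $\mathbf J=\mathbf J^{(n)}$ of functions of $X^n_{\mathcal M}$ such that for every $0<\epsilon<1$ and all large $n$ there exist $J_i=J_i(X^n_i,\mathbf F)$, $i\in\mathcal M$, with $\Pr[J_1=\cdots=J_m=\mathbf J]\ge1-\epsilon$. For a partition $\mathcal P$ with $|\mathcal P|\ge2$, $\Delta(\mathcal P)=\frac{1}{|\mathcal P|-1}[\sum_{A\in\mathcal P}H(X_A)-H(X_{\mathcal M})]$. $\mathcal B$ is the set of nonempty proper subsets of $\mathcal M$, and $\lambda^{(\mathcal P)}_B=\mathbf 1\{B^c\in\mathcal P\}/(|\mathcal P|-1)$. *)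

(* Defs.v *)
From Stdlib Require Import Reals.
From mathcomp Require Import all_boot.
Set Implicit Arguments.
Unset Strict Implicit.
Unset Printing Implicit Defensive.

Local Open Scope R_scope.

Definition prob (W : finType) (p : W -> R) (E : pred W) : R :=
  \big[Rplus/0]_(w | E w) p w.

(* Shannon entropy (natural log) of a random variable Z : W -> T, i.e.
   H(Z) = - sum_w p(w) ln P[Z = Z(w)] = - sum_z P[Z=z] ln P[Z=z]. *)
Definition entropy (W : finType) (p : W -> R) (T : eqType) (Z : W -> T) : R :=
  - \big[Rplus/0]_(w : W) (p w * ln (prob p (fun w' => Z w' == Z w))).

Definition cond_entropy (W : finType) (p : W -> R) (T U : eqType)
  (Z : W -> T) (Y : W -> U) : R :=
  entropy p (fun w => (Z w, Y w)) - entropy p Y.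

Definition iid_pmf (W : finType) (p : W -> R) (n : nat) (w : {ffun 'I_n -> W}) : R :=
  \big[Rmult/1]_(t < n) p (w t).

Section Source.
Variables (m : nat) (Al : 'I_m -> finType) (W : finType)
          (X : forall i : 'I_m, W -> Al i).

Definition XA (A : {set 'I_m}) (w : W) : seq {i : 'I_m & Al i} :=
  [seq existT (fun i => Al i) i (X i w) | i <- enum A].

Definition Xn (n : nat) (i : 'I_m) (w : {ffun 'I_n -> W}) : {ffun 'I_n -> Al i} :=
  [ffun t => X i (w t)].

Definition XnA (n : nat) (A : {set 'I_m}) (w : {ffun 'I_n -> W})
  : seq {i : 'I_m & {ffun 'I_n -> Al i}} :=
  [seq existT (fun i => {ffun 'I_n -> Al i}) i (Xn i w) | i <- enum A].

(* A single transmission: a sender and a deterministic function of the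
   sender's observation X_i^n and the previous transmissions.  Messages
   are encoded in nat (any finite alphabet injects into nat). *)
Record transmission (n : nat) := Transmission {
  sender : 'I_m;
  message : {ffun 'I_n -> Al sender} -> seq nat -> nat }.

Definition communication (n : nat) := seq (transmission n).

Fixpoint run_aux (n : nat) (hist : seq nat) (F : communication n)
  (w : {ffun 'I_n -> W}) : seq nat :=
  match F with
  | [::] => hist
  | tr :: F' => run_aux (rcons hist (@message n tr (Xn (@sender n tr) w) hist)) F' w
  end.

Definition run (n : nat) (F : communication n) (w : {ffun 'I_n -> W}) : seq nat :=
  run_aux [::] F w.

Definition J_val (J : forall n, (forall i : 'I_m, {ffun 'I_n -> Al i}) -> nat)
  (n : nat) (w : {ffun 'I_n -> W}) : nat := J n (fun i => Xn i w).

Definition is_CR (p : W -> R) (F : forall n, communication n)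
  (J : forall n, (forall i : 'I_m, {ffun 'I_n -> Al i}) -> nat) : Prop :=
  forall eps : R, 0 < eps < 1 ->
  exists N : nat, forall n : nat, (N <= n)%N ->
    exists Ji : forall i : 'I_m, {ffun 'I_n -> Al i} -> seq nat -> nat,
      prob (@iid_pmf W p n)
        (fun w => [forall i, Ji i (Xn i w) (run (F n) w) == J_val J w])
      >= 1 - eps.

Definition Delta_part (p : W -> R) (P : {set {set 'I_m}}) : R :=
  (\big[Rplus/0]_(A in P) entropy p (XA A) - entropy p (XA setT))
  / INR (#|P| - 1).

Definition is_partition_M (P : {set {set 'I_m}}) : Prop :=
  partition P [set: 'I_m] /\ (2 <= #|P|)%N.

Definition lam (P : {set {set 'I_m}}) (B : {set 'I_m}) : R :=
  if ~: B \in P then / INR (#|P| - 1) else 0.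

End Source.

(* Main.v *)
From HB Require Import structures.
Require Import Defs.
From Stdlib Require Import Reals Lra.
From mathcomp Require Import all_boot.
Local Open Scope R_scope.
Lemma RplusA : associative Rplus. Proof. by move=> x y z; rewrite Rplus_assoc. Qed.
Lemma RmultA : associative Rmult. Proof. by move=> x y z; rewrite Rmult_assoc. Qed.
HB.instance Definition _ := Monoid.isComLaw.Build R 0 Rplus RplusA Rplus_comm Rplus_0_l.
HB.instance Definition _ := Monoid.isComLaw.Build R 1 Rmult RmultA Rmult_comm Rmult_1_l.
HB.instance Definition _ := Monoid.isMulLaw.Build R 0 Rmult Rmult_0_l Rmult_0_r.
HB.instance Definition _ := Monoid.isAddLaw.Build R Rmult Rplus Rmult_plus_distr_r Rmult_plus_distr_l.

Section Gen.
Variable I : finType.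

Lemma sumR_le (P : pred I) (f g : I -> R) :
  (forall i, P i -> f i <= g i) ->
  \big[Rplus/0]_(i | P i) f i <= \big[Rplus/0]_(i | P i) g i.
Proof.
move=> H; apply: (big_ind2 (fun x y => x <= y)) => //; first lra.
by move=> *; apply: Rplus_le_compat.
Qed.

Lemma sumR_ge0 (P : pred I) (f : I -> R) :
  (forall i, P i -> 0 <= f i) -> 0 <= \big[Rplus/0]_(i | P i) f i.
Proof.
move=> H; apply: (big_ind (fun x => 0 <= x)) => //; first lra.
by move=> *; lra.
Qed.

Lemma sumR_sub_pred (P Q : pred I) (f : I -> R) :
  (forall i, 0 <= f i) -> (forall i, P i -> Q i) ->
  \big[Rplus/0]_(i | P i) f i <= \big[Rplus/0]_(i | Q i) f i.
Proof.
move=> H0 HPQ; rewrite (big_mkcond P) (big_mkcond Q).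
apply: sumR_le => i _; case: (boolP (P i)) => Pi.
  by rewrite (HPQ _ Pi); lra.
by case: (Q i) => //; lra.
Qed.

Lemma sumR_mulr (P : pred I) (f : I -> R) c :
  \big[Rplus/0]_(i | P i) (f i * c) = (\big[Rplus/0]_(i | P i) f i) * c.
Proof.
symmetry; apply: (big_morph (fun x => x * c)).
  by move=> x y /=; lra.
by lra.
Qed.

Lemma sumR_mull (P : pred I) (f : I -> R) c :
  \big[Rplus/0]_(i | P i) (c * f i) = c * (\big[Rplus/0]_(i | P i) f i).
Proof.
rewrite Rmult_comm -sumR_mulr; apply: eq_bigr => i _; lra.
Qed.

Lemma sumR_opp (P : pred I) (f : I -> R) :
  \big[Rplus/0]_(i | P i) (- f i) = - (\big[Rplus/0]_(i | P i) f i).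
Proof.
symmetry; apply: (big_morph Ropp).
  by move=> x y /=; lra.
by lra.
Qed.

Lemma sumR_ge_one (P : pred I) (f : I -> R) j :
  (forall i, 0 <= f i) -> P j -> f j <= \big[Rplus/0]_(i | P i) f i.
Proof.
move=> H0 Pj; rewrite (bigD1 j) //=.
have := sumR_ge0 (fun i => P i && (i != j)) f (fun i _ => H0 i); lra.
Qed.

Lemma sumR_const (c : R) : \big[Rplus/0]_(i : I) c = INR #|I| * c.
Proof.
rewrite big_const; elim: #|I| => [|k IH]; first by rewrite /=; lra.
rewrite S_INR /= IH; lra.
Qed.
End Gen.

Lemma ln_le_m1 x : 0 < x -> ln x <= x - 1.
Proof. move=> Hx; have := exp_ineq1_le (ln x); rewrite exp_ln //; lra. Qed.

Lemma ln_le' x y : 0 < x -> x <= y -> ln x <= ln y.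
Proof.
move=> Hx [Hxy|->]; last lra.
by apply: Rlt_le; apply: ln_increasing.
Qed.

Lemma Rinv_ge0 x : 0 <= x -> 0 <= / x.
Proof.
move=> [H|<-]; first by apply: Rlt_le; apply: Rinv_0_lt_compat.
rewrite Rinv_0; lra.
Qed.

Section Fano.
Variables (O : finType) (q : O -> R).
Hypothesis hq0 : forall w, 0 <= q w.
Hypothesis hq1 : \big[Rplus/0]_(w : O) q w = 1.
Variables (T U : eqType) (Z : O -> T) (Y : O -> U).

Let PY w := prob q (fun w' => Y w' == Y w).
Let PZY w := prob q (fun w' => (Z w', Y w') == (Z w, Y w)).

Lemma ce_eq : cond_entropy q Z Y =
  \big[Rplus/0]_(w : O) (q w * (ln (PY w) - ln (PZY w))).
Proof.
rewrite /cond_entropy /entropy.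
have -> : \big[Rplus/0]_(w : O) (q w * (ln (PY w) - ln (PZY w))) =
   \big[Rplus/0]_(w : O) (q w * ln (PY w) + - (q w * ln (PZY w))).
  by apply: eq_bigr => w _; lra.
rewrite big_split /= sumR_opp /PY /PZY; lra.
Qed.

Lemma prob_le1 (P : pred O) : prob q P <= 1.
Proof.
rewrite -hq1 /prob; apply: sumR_sub_pred => //.
Qed.

Lemma PZY_ge w : q w <= PZY w.
Proof. by apply: sumR_ge_one => //=. Qed.

Lemma PZY_le w : PZY w <= PY w.
Proof.
apply: sumR_sub_pred => // w' /eqP [] _ ->; exact: eqxx.
Qed.

Lemma ce_ge0 : 0 <= cond_entropy q Z Y.
Proof.
rewrite ce_eq; apply: sumR_ge0 => w _.
case: (hq0 w) => Hq; last by rewrite -Hq; lra.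
have h1 := PZY_ge w; have h2 := PZY_le w.
have := ln_le' (PZY w) (PY w) ltac:(lra) h2.
move=> h; apply: Rmult_le_pos; lra.
Qed.

Variable G : pred O.
Hypothesis hG : forall w1 w2, G w1 -> G w2 -> Y w1 = Y w2 -> Z w1 = Z w2.

Lemma term_bound w c : 0 < c ->
  q w * (ln (PY w) - ln (PZY w)) <= q w * ln c + q w * PY w * / PZY w * / c.
Proof.
move=> Hc.
case: (hq0 w) => Hq; last by rewrite -Hq; lra.
have h1 := PZY_ge w; have h2 := PZY_le w.
have Hp : 0 < PZY w by lra.
have Hr : 0 < PY w * / PZY w * / c.
  apply: Rmult_lt_0_compat; last exact: Rinv_0_lt_compat.
  apply: Rmult_lt_0_compat; [lra | exact: Rinv_0_lt_compat].
have := ln_le_m1 _ Hr.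
rewrite !ln_mult ?ln_Rinv //; try lra.
all: try (apply: Rmult_lt_0_compat).
all: try (apply: Rinv_0_lt_compat).
all: try lra.
move=> h.
have : q w * (ln (PY w) + - ln (PZY w) + - ln c) <= q w * (PY w * / PZY w * / c).
  apply: Rmult_le_compat_l; lra.
have E1 : q w * PY w * / PZY w * / c = q w * (PY w * / PZY w * / c) by ring.
have E2 : q w * (ln (PY w) - ln (PZY w)) = q w * (ln (PY w) + - ln (PZY w) + - ln c) + q w * ln c by ring.
lra.
Qed.

Lemma good_bound :
  \big[Rplus/0]_(w | G w) (q w * PY w * / PZY w) <= 1.
Proof.
have E : forall w, q w * PY w * / PZY w =
    \big[Rplus/0]_(w' : O) (if Y w' == Y w then q w * / PZY w * q w' else 0).
  move=> w; rewrite Rmult_assoc (Rmult_comm (PY w)) -Rmult_assoc.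
  rewrite /PY /prob big_mkcond -sumR_mull.
  by apply: eq_bigr => w' _; case: ifP => _; lra.
rewrite (eq_bigr _ (fun w _ => E w)) big_mkcond /=.
have -> : \big[Rplus/0]_(i : O)
    (if G i then \big[Rplus/0]_(w' : O)
       (if Y w' == Y i then q i * / PZY i * q w' else 0) else 0) =
   \big[Rplus/0]_(i : O) \big[Rplus/0]_(w' : O)
       (if G i && (Y w' == Y i) then q i * / PZY i * q w' else 0).
  apply: eq_bigr => i _; case: (G i) => //=.
  by rewrite big1 // => w' _.
rewrite exchange_big /= -hq1; apply: sumR_le => w' _.
rewrite -big_mkcond /=.
have -> : \big[Rplus/0]_(i | G i && (Y w' == Y i)) (q i * / PZY i * q w') =
  (\big[Rplus/0]_(i | G i && (Y w' == Y i)) (q i * / PZY i)) * q w'.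
  by rewrite sumR_mulr.
suff : \big[Rplus/0]_(i | G i && (Y w' == Y i)) (q i * / PZY i) <= 1.
  move=> h; have := hq0 w'; nra.
case: (pickP (fun i => G i && (Y w' == Y i))) => [w0 /andP [G0 /eqP Y0]| none].
  have Hc : forall i, G i && (Y w' == Y i) -> PZY i = PZY w0.
    move=> i /andP [Gi /eqP Yi].
    have Yi0 : Y i = Y w0 by rewrite -Yi -Y0.
    by rewrite /PZY (hG _ _ Gi G0 Yi0) Yi0.
  rewrite (eq_bigr (fun i => q i * / PZY w0)); last by move=> i /Hc ->.
  rewrite sumR_mulr.
  have Hs : \big[Rplus/0]_(i | G i && (Y w' == Y i)) q i <= PZY w0.
    apply: sumR_sub_pred => // i /andP [Gi /eqP Yi].
    have Yi0 : Y i = Y w0 by rewrite -Yi -Y0.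
    by rewrite (hG _ _ Gi G0 Yi0) Yi0.
  have h0 := @sumR_ge0 O (fun i => G i && (Y w' == Y i)) q (fun i _ => hq0 i).
  case: (Req_dec (PZY w0) 0) => Hz.
    by rewrite Hz Rinv_0; lra.
  have Hpos : 0 < PZY w0 by have := PZY_ge w0; lra.
  apply: (Rmult_le_reg_r (PZY w0)) => //.
  rewrite Rmult_assoc Rinv_l //; lra.
rewrite big_pred0 //; lra.
Qed.


Lemma fano : cond_entropy q Z Y <= 2 + prob q (predC G) * ln (INR #|O|).
Proof.
have HN : 0 < INR #|O|.
  apply: lt_0_INR; apply/ltP; rewrite lt0n; apply/negP => /eqP/card0_eq H.
  move: hq1; rewrite big_pred0 //; lra.
set N := INR #|O| in HN *.
pose c w := if G w then 1 else N.
have Hc : forall w, 0 < c w by move=> w; rewrite /c; case: (G w); lra.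
rewrite ce_eq.
have := (@sumR_le O (fun _ => true) (fun w => q w * (ln (PY w) - ln (PZY w)))
   (fun w => q w * ln (c w) + q w * PY w * / PZY w * / c w) (fun w _ => term_bound w (c w) (Hc w))).
move=> H; apply: Rle_trans H _.
rewrite big_split /=.
rewrite (bigID G) /= (bigID G xpredT (fun w => q w * PY w * / PZY w * / c w)) /=.
have A1 : \big[Rplus/0]_(i | G i) (q i * ln (c i)) = 0.
  rewrite big1 // => i Gi; rewrite /c Gi ln_1; lra.
have A2 : \big[Rplus/0]_(i | ~~ G i) (q i * ln (c i)) = prob q (predC G) * ln N.
  rewrite /prob -sumR_mulr; apply: eq_big => // i /negbTE Gi; by rewrite /c Gi.
have A3 : \big[Rplus/0]_(i | G i) (q i * PY i * / PZY i * / c i) <= 1.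
  rewrite (eq_bigr (fun i => q i * PY i * / PZY i)); first exact: good_bound.
  by move=> i Gi; rewrite /c Gi Rinv_1 Rmult_1_r.
have A4 : \big[Rplus/0]_(i | ~~ G i) (q i * PY i * / PZY i * / c i) <= 1.
  apply: Rle_trans (_ : \big[Rplus/0]_(i | ~~ G i) (/ N) <= 1).
    apply: sumR_le => i /negbTE Gi; rewrite /c Gi.
    have hN' : 0 < / N by apply: Rinv_0_lt_compat.
    case: (hq0 i) => Hq; last by rewrite -Hq; lra.
    have h1 := PZY_ge i; have h2 := PZY_le i; have h3 := prob_le1 (fun w' => Y w' == Y i).
    have Hp : 0 < PZY i by lra.
    have h4 : q i * / PZY i <= 1.
      apply: (Rmult_le_reg_r (PZY i)) => //.
      rewrite Rmult_assoc Rinv_l; lra.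
    have h5 : 0 <= q i * / PZY i by apply: Rmult_le_pos; [lra | apply: Rinv_ge0; lra].
    have E1 : q i * PY i * / PZY i * / N = (q i * / PZY i) * PY i * / N by ring.
    have h6 : q i * / PZY i * PY i <= 1.
      rewrite -[X in _ <= X]Rmult_1_r; apply: Rmult_le_compat => //.
      rewrite /PY /prob; apply: sumR_ge0 => *; exact: hq0.
    rewrite E1 -[X in _ <= X]Rmult_1_l; apply: Rmult_le_compat_r; lra.
  apply: Rle_trans (_ : \big[Rplus/0]_(i : O) (/ N) <= 1).
    apply: sumR_sub_pred => [i|//]; apply: Rlt_le; exact: Rinv_0_lt_compat.
  rewrite sumR_const -/N Rinv_r; lra.
lra.
Qed.
End Fano.
Lemma iid_ge0 (W : finType) (p : W -> R) n : (forall w, 0 <= p w) ->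
  forall w, 0 <= iid_pmf p w (n:=n).
Proof.
move=> H w; rewrite /iid_pmf; apply: (big_ind (fun x => 0 <= x)) => //; first lra.
by move=> x y hx hy; apply: Rmult_le_pos.
Qed.

Lemma iid_sum1 (W : finType) (p : W -> R) n : \big[Rplus/0]_(w : W) p w = 1 ->
  \big[Rplus/0]_(w : {ffun 'I_n -> W}) iid_pmf p w = 1.
Proof.
move=> H; rewrite /iid_pmf.
have := @bigA_distr_bigA R 0 1 Rmult Rplus ('I_n) W (fun _ w => p w).
move=> <-; rewrite big1 // => i _; exact: H.
Qed.

Lemma arith eps L K ni nn d : 0 < eps -> 0 <= L -> 0 <= K -> 0 <= ni ->
  ni * nn = 1 -> ni < eps / (4 * L + 1) ->
  d * (4 * (K * L + 1) + eps) = eps -> 0 <= d ->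
  ni * (L * (2 + d * (nn * K))) < eps.
Proof.
move=> He HL HK Hni Hnn Hlt Hd Hd0.
have E : ni * (L * (2 + d * (nn * K))) = 2 * (L * ni) + d * (K * L) * (ni * nn) by ring.
rewrite E Hnn Rmult_1_r.
have H4 : 0 < 4 * L + 1 by lra.
have h1 : ni * (4 * L + 1) < eps.
  apply: (Rmult_lt_reg_r (/ (4 * L + 1))); first exact: Rinv_0_lt_compat.
  rewrite Rmult_assoc Rinv_r; lra.
have h2 : L * ni * 4 <= eps by nra.
have h3 : 0 <= d * (K * L) by apply: Rmult_le_pos => //; apply: Rmult_le_pos.
have h4 : 4 * (d * (K * L)) + 4 * d + d * eps = d * (4 * (K * L + 1) + eps) by ring.
have h5 : 0 <= d * eps by nra.
lra.
Qed.

Lemma prob_compl (O : finType) (q : O -> R) (P : pred O) :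
  \big[Rplus/0]_(w : O) q w = 1 -> prob q (predC P) = 1 - prob q P.
Proof.
rewrite (bigID P) /= /prob => <-.
have -> : \big[Rplus/0]_(w | predC P w) q w = \big[Rplus/0]_(w | ~~ P w) q w by [].
lra.
Qed.

Theorem lemma2 (m : nat) (Al : 'I_m -> finType) (W : finType) (p : W -> R)
  (X : forall i : 'I_m, W -> Al i)
  (Hm : (2 <= m)%N)
  (Hp0 : forall w, 0 <= p w)
  (Hp1 : \big[Rplus/0]_(w : W) p w = 1)
  (Pstar : {set {set 'I_m}})
  (HP : is_partition_M Pstar)
  (Hmin : forall P : {set {set 'I_m}}, is_partition_M P ->
            Delta_part X p Pstar <= Delta_part X p P)
  (F : forall n, communication Al n)
  (J : forall n, (forall i : 'I_m, {ffun 'I_n -> Al i}) -> nat)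
  (HJ : is_CR X p F J) :
  Un_cv (fun n : nat =>
           / INR n *
           \big[Rplus/0]_(B : {set 'I_m} | (B != set0) && (B != setT))
              (lam Pstar B *
               cond_entropy (@iid_pmf W p n) (J_val X J (n:=n))
                 (fun w => (XnA X (~: B) w, run X (F n) w))))
        0.
Proof.
pose Hc n B := cond_entropy (@iid_pmf W p n) (J_val X J (n:=n))
                 (fun w => (XnA X (~: B) w, run X (F n) w)).
pose S n := \big[Rplus/0]_(B : {set 'I_m} | (B != set0) && (B != setT))
              (lam Pstar B * Hc n B).
pose L := \big[Rplus/0]_(B : {set 'I_m} | (B != set0) && (B != setT)) lam Pstar B.
have Hlam : forall B, 0 <= lam Pstar B.
  move=> B; rewrite /lam; case: ifP => _; last lra.
  apply: Rinv_ge0; exact: pos_INR.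
have HL : 0 <= L by apply: sumR_ge0.
have HW : (0 < #|W|)%N.
  rewrite lt0n; apply/negP => /eqP/card0_eq H.
  move: Hp1; rewrite big_pred0 //; lra.
have HWR : 1 <= INR #|W|.
  have -> : 1 = INR 1 by [].
  by apply: le_INR; apply/leP.
pose K := ln (INR #|W|).
have HK : 0 <= K by rewrite /K -ln_1; apply: ln_le'; lra.
have Hq0 : forall n w, 0 <= iid_pmf p w (n:=n) by move=> n; exact: iid_ge0.
have Hq1 : forall n, \big[Rplus/0]_(w : {ffun 'I_n -> W}) iid_pmf p w = 1
  by move=> n; exact: iid_sum1.
have Sge0 : forall n, 0 <= S n.
  move=> n; apply: sumR_ge0 => B _; apply: Rmult_le_pos => //.
  by rewrite /Hc; apply: (@ce_ge0 _ _ (Hq0 n)).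
have Hcard : forall n, ln (INR #|{ffun 'I_n -> W}|) = INR n * K.
  move=> n; rewrite card_ffun card_ord.
  have -> : (#|W| ^ n)%N = Nat.pow #|W| n.
    by elim: n => // n IH; rewrite expnS IH.
  rewrite pow_INR ln_pow //; lra.
have bound : forall d, 0 < d < 1 -> exists N, forall n, (N <= n)%N ->
    S n <= L * (2 + d * (INR n * K)).
  move=> d hd; have [N HN] := HJ d hd.
  exists N => n hn; have [Ji HJi] := HN n hn.
  set G := (fun w => [forall i, Ji i (Xn X i w) (run X (F n) w) == J_val X J w]) in HJi.
  have Hbad : prob (iid_pmf p (n:=n)) (predC G) <= d.
    rewrite prob_compl; last exact: Hq1.
    move: HJi; rewrite /G; lra.
  rewrite /L -sumR_mulr; apply: sumR_le => B /andP [B0 BT].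
  apply: Rmult_le_compat_l => //.
  have [i0 Hi0] : exists i0, i0 \in ~: B.
    apply/set0Pn; apply/negP => /eqP h; move: BT.
    by rewrite -(setCK B) h setC0 eqxx.
  have hG : forall w1 w2, G w1 -> G w2 ->
      (XnA X (~: B) w1, run X (F n) w1) = (XnA X (~: B) w2, run X (F n) w2) ->
      J_val X J w1 = J_val X J w2.
    move=> w1 w2 G1 G2 [hX hr].
    move: hX; rewrite /XnA => /eq_in_map /(_ i0); rewrite mem_enum => /(_ Hi0) hx.
    have hx' : Xn X i0 w1 = Xn X i0 w2.
      apply: (Eqdep_dec.inj_pair2_eq_dec _ _ _ _ _ _ hx).
      by move=> x y; case: (eqVneq x y) => h; [left | right; apply/eqP].
    move/forallP: G1 => /(_ i0) /eqP <-.
    move/forallP: G2 => /(_ i0) /eqP <-.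
    by rewrite hx' hr.
  have := @fano _ _ (Hq0 n) (Hq1 n) _ _ _ _ _ hG.
  rewrite Hcard => h; apply: Rle_trans h _.
  apply: Rplus_le_compat_l; apply: Rmult_le_compat_r => //.
  by apply: Rmult_le_pos => //; exact: pos_INR.
move=> eps heps.
pose d := eps / (4 * (K * L + 1) + eps).
have hden : 0 < 4 * (K * L + 1) + eps.
  have : 0 <= K * L by apply: Rmult_le_pos.
  lra.
have hd : d * (4 * (K * L + 1) + eps) = eps.
  by rewrite /d /Rdiv Rmult_assoc Rinv_l; lra.
have hd0 : 0 < d.
  by rewrite /d; apply: Rdiv_lt_0_compat.
have hd1 : d < 1.
  have : 0 <= K * L by apply: Rmult_le_pos.
  nra.
have [N1 HN1] := bound d (conj hd0 hd1).
have h4L : 0 < 4 * L + 1 by lra.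
have [N2 [HN2 HN2p]] := archimed_cor1 (eps / (4 * L + 1))
  (Rdiv_lt_0_compat _ _ heps h4L).
exists (maxn N1 N2) => n hnge; have hn : (maxn N1 N2 <= n)%N by apply/leP.
have hn1 : (N1 <= n)%N by exact: leq_trans (leq_maxl N1 N2) hn.
have hn2 : (N2 <= n)%N by exact: leq_trans (leq_maxr N1 N2) hn.
have hN2 : 0 < INR N2 by apply: lt_0_INR.
have hnR : INR N2 <= INR n by apply: le_INR; apply/leP.
have hn0 : 0 < INR n by lra.
rewrite /R_dist Rminus_0_r.
have Hs := HN1 n hn1.
have Hs0 := Sge0 n.
have hi : 0 <= / INR n by apply: Rlt_le; apply: Rinv_0_lt_compat.
rewrite -/(S n) Rabs_right; last by apply: Rle_ge; apply: Rmult_le_pos.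
apply: Rle_lt_trans (_ : / INR n * (L * (2 + d * (INR n * K))) < eps).
  exact: Rmult_le_compat_l.
apply: (arith _ _ _ _ (INR n)) => //; last lra.
- by rewrite Rinv_l; lra.
- apply: Rle_lt_trans HN2; exact: Rinv_le_contravar.
Qed.
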